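(* Let $d>K\ge1$, $\mathbf Q\in\mathrm{St}(d,K)$, $\lambda_1>\dots>\lambda_K>0$, $\boldsymbol\Theta=\mathrm{diag}(\sqrt{\lambda_1},\dots,\sqrt{\lambda_K})$, $a_1>\dots>a_K>0$, and let $g,d_F,\mathcal A_\alpha,\rho_\alpha,\mathcal P_{\mathrm{St}}$ be as in the context. For every $\alpha>0$ there exist constants $\beta_3>0$ and $\beta_4>0$ such that for every $\mathbf X^0\in\mathrm{St}(d,K)$ and every sequence generated by $\mathbf X^{t+1}\in\mathcal P_{\mathrm{St}}(\mathcal A_\alpha(\mathbf X^t))$, the following hold for all $t\ge0$: (a) $g(\mathbf X^{t+1})-g(\mathbf X^t)\ge\alpha\|\mathbf X^t-\mathbf X^{t+1}\|_F^2$; (b) $g(\mathbf Q)-g(\mathbf X^t)\le\beta_3\,d_F^2(\mathbf X^t,\mathbf Q)$; (c) $\rho_\alpha(\mathbf X^t)\le\beta_4\|\mathbf X^{t+1}-\mathbf X^t\|_F$.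
   Context: $\mathrm{St}(d,K)=\{\mathbf X\in\mathbb R^{d\times K}:\mathbf X^\top\mathbf X=\mathbf I_K\}$. $g(\mathbf X)=\mathrm{tr}(\mathbf X^\top\mathbf Q\boldsymbol\Theta^2\mathbf Q^\top\mathbf X\,\mathrm{diag}(a_1,\dots,a_K))$. $d_F(\mathbf X,\mathbf Q)=\min_{\mathbf q\in\{1,-1\}^K}\|\mathbf X-\mathbf Q\,\mathrm{diag}(\mathbf q)\|_F$. $\mathcal A_\alpha(\mathbf X)=\alpha\mathbf X+\mathbf Q\boldsymbol\Theta^2\mathbf Q^\top\mathbf X\,\mathrm{diag}(a_1,\dots,a_K)$. $\rho_\alpha(\mathbf X)=\|\mathbf X\mathbf V\boldsymbol\Sigma\mathbf V^\top-\mathcal A_\alpha(\mathbf X)\|_F$ where $\mathcal A_\alpha(\mathbf X)=\mathbf U\boldsymbol\Sigma\mathbf V^\top$ is a thin SVD (equivalently $\mathbf V\boldsymbol\Sigma\mathbf V^\top=(\mathcal A_\alpha(\mathbf X)^\top\mathcal A_\alpha(\mathbf X))^{1/2}$). $\mathcal P_{\mathrm{St}}(\mathbf Y)$ is the set of Frobenius-nearest points of $\mathrm{St}(d,K)$ to $\mathbf Y$. *)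

(* Defs.v *)
From HB Require Import structures.
From mathcomp Require Import all_boot all_order all_algebra.
Set Implicit Arguments. Unset Strict Implicit. Unset Printing Implicit Defensive.
Import Order.TTheory GRing.Theory Num.Theory.
Local Open Scope ring_scope.

Section Defs.
Variable R : rcfType.

Definition frob (m n : nat) (A : 'M[R]_(m, n)) : R :=
  Num.sqrt (\sum_(i < m) \sum_(j < n) A i j ^+ 2).

Definition stiefel (d K : nat) (X : 'M[R]_(d, K)) : Prop := X^T *m X = 1%:M.

(* diag(q) for a sign vector q in {1,-1}^K, encoded by a boolean function *)
Definition sign_diag (K : nat) (q : {ffun 'I_K -> bool}) : 'M[R]_K :=
  diag_mx (\row_i (if q i then 1 else -1)).

(* d_F(X,Q) = min_{q in {1,-1}^K} ||X - Q diag(q)||_F  (the seed value is the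
   term for q = all ones, so the big min is the true minimum) *)
Definition dF (d K : nat) (X Q : 'M[R]_(d, K)) : R :=
  \big[Num.min/frob (X - Q)]_(q : {ffun 'I_K -> bool}) frob (X - Q *m sign_diag q).

Definition Theta (K : nat) (lam : 'I_K -> R) : 'M[R]_K :=
  diag_mx (\row_i Num.sqrt (lam i)).

Definition Mmat (d K : nat) (Q : 'M[R]_(d, K)) (lam : 'I_K -> R) : 'M[R]_d :=
  Q *m Theta lam *m Theta lam *m Q^T.

Definition diag_a (K : nat) (a : 'I_K -> R) : 'M[R]_K := diag_mx (\row_i a i).

Definition gfun (d K : nat) (Q : 'M[R]_(d, K)) (lam a : 'I_K -> R)
  (X : 'M[R]_(d, K)) : R :=
  \tr (X^T *m Mmat Q lam *m X *m diag_a a).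

Definition Aalpha (d K : nat) (Q : 'M[R]_(d, K)) (lam a : 'I_K -> R)
  (alpha : R) (X : 'M[R]_(d, K)) : 'M[R]_(d, K) :=
  alpha *: X + Mmat Q lam *m X *m diag_a a.

Definition in_proj_St (d K : nat) (Y X : 'M[R]_(d, K)) : Prop :=
  stiefel X /\ forall Z : 'M[R]_(d, K), stiefel Z -> frob (Y - X) <= frob (Y - Z).

Definition thin_svd (d K : nat) (A U : 'M[R]_(d, K)) (s : 'I_K -> R)
  (V : 'M[R]_K) : Prop :=
  [/\ U^T *m U = 1%:M, V^T *m V = 1%:M, (forall i, 0 <= s i)
    & A = U *m diag_mx (\row_i s i) *m V^T].

(* rho_alpha(X) computed from a thin SVD (U, s, V) of A_alpha(X):
   ||X V Sigma V^T - A_alpha(X)||_F (independent of the chosen SVD) *)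
Definition rho_svd (d K : nat) (Q : 'M[R]_(d, K)) (lam a : 'I_K -> R)
  (alpha : R) (X : 'M[R]_(d, K)) (s : 'I_K -> R) (V : 'M[R]_K) : R :=
  frob (X *m V *m diag_mx (\row_i s i) *m V^T - Aalpha Q lam a alpha X).

End Defs.

(* Main.v *)
Require Import Defs.
From HB Require Import structures.
From mathcomp Require Import all_boot all_order all_algebra.
From mathcomp Require Import ring lra.
Import Order.TTheory GRing.Theory Num.Theory.
Local Open Scope ring_scope.

Section Helpers.
Local Set Implicit Arguments. Local Unset Strict Implicit.
Variable R : rcfType.

Lemma trmx_mulR (m n p : nat) (A : 'M[R]_(m, n)) (B : 'M[R]_(n, p)) :
  (A *m B)^T = B^T *m A^T.
Proof. exact: trmx_mul. Qed.

Lemma mulmxBlR (m n p : nat) (A B : 'M[R]_(m, n)) (C : 'M[R]_(n, p)) :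
  (A - B) *m C = A *m C - B *m C.
Proof. exact: mulmxBl. Qed.

Lemma mulmxBrR (m n p : nat) (A : 'M[R]_(m, n)) (B C : 'M[R]_(n, p)) :
  A *m (B - C) = A *m B - A *m C.
Proof. exact: mulmxBr. Qed.

Lemma mxtrace_mulCR (m n : nat) (A : 'M[R]_(m, n)) (B : 'M[R]_(n, m)) :
  \tr (A *m B) = \tr (B *m A).
Proof. exact: mxtrace_mulC. Qed.

Lemma tr_sq (m n : nat) (B : 'M[R]_(m, n)) :
  \tr (B *m B^T) = \sum_i \sum_j B i j ^+ 2.
Proof.
rewrite /mxtrace; apply: eq_bigr => i _; rewrite mxE.
by apply: eq_bigr => j _; rewrite mxE expr2.
Qed.

Lemma tr_diag (m n : nat) (C : 'M[R]_(m, n)) (e : 'rV[R]_n) :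
  \tr (C *m diag_mx e *m C^T) = \sum_i \sum_j C i j ^+ 2 * e 0 j.
Proof.
rewrite mul_mx_diag /mxtrace; apply: eq_bigr => i _; rewrite mxE.
by apply: eq_bigr => j _; rewrite !mxE expr2 mulrAC.
Qed.

Lemma frob_ge0 (m n : nat) (B : 'M[R]_(m, n)) : 0 <= frob B.
Proof. exact: sqrtr_ge0. Qed.

Lemma sumsq_ge0 (m n : nat) (B : 'M[R]_(m, n)) : 0 <= \sum_i \sum_j B i j ^+ 2.
Proof. by apply: sumr_ge0 => i _; apply: sumr_ge0 => j _; apply: sqr_ge0. Qed.

Lemma frob2 (m n : nat) (B : 'M[R]_(m, n)) : frob B ^+ 2 = \tr (B *m B^T).
Proof. by rewrite /frob sqr_sqrtr ?tr_sq // sumsq_ge0. Qed.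

Lemma frob2T (m n : nat) (B : 'M[R]_(m, n)) : frob B ^+ 2 = \tr (B^T *m B).
Proof. by rewrite frob2 mxtrace_mulCR. Qed.

Lemma frobN (m n : nat) (B : 'M[R]_(m, n)) : frob (- B) = frob B.
Proof.
rewrite /frob; congr Num.sqrt; apply: eq_bigr => i _; apply: eq_bigr => j _.
by rewrite mxE sqrrN.
Qed.

Lemma trTC (m n : nat) (A Z : 'M[R]_(m, n)) : \tr (Z^T *m A) = \tr (A^T *m Z).
Proof. by rewrite -mxtrace_tr trmx_mulR trmxK. Qed.

Lemma frob2_expand (d K : nat) (A Z : 'M[R]_(d, K)) : stiefel Z ->
  frob (A - Z) ^+ 2 = \tr (A^T *m A) - 2 * \tr (A^T *m Z) + K%:R.
Proof.
move=> hZ; rewrite frob2T.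
have -> : (A - Z)^T = A^T - Z^T by rewrite linearB.
rewrite !mulmxBl !mulmxBr !linearB /= hZ mxtrace1.
rewrite trTC; lra.
Qed.

Lemma proj_max (d K : nat) (A Y Z : 'M[R]_(d, K)) : stiefel Y -> stiefel Z ->
  frob (A - Y) <= frob (A - Z) -> \tr (A^T *m Z) <= \tr (A^T *m Y).
Proof.
move=> hY hZ h.
have h2 : frob (A - Y) ^+ 2 <= frob (A - Z) ^+ 2.
  by apply: lerXn2r => //; rewrite nnegrE frob_ge0.
move: h2; rewrite !frob2_expand //; lra.
Qed.

Lemma Theta_T (K : nat) (lam : 'I_K -> R) : (Theta lam)^T = Theta lam.
Proof. exact: tr_diag_mx. Qed.

Lemma Mmat_T (d K : nat) (Q : 'M[R]_(d, K)) lam : (Mmat Q lam)^T = Mmat Q lam.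
Proof. by rewrite /Mmat !trmx_mulR trmxK !Theta_T ?mulmxA. Qed.

Lemma diag_a_T (K : nat) (a : 'I_K -> R) : (diag_a a)^T = diag_a a.
Proof. exact: tr_diag_mx. Qed.

Lemma gfun_sum (d K : nat) (Q : 'M[R]_(d, K)) lam a (X : 'M[R]_(d, K)) :
  gfun Q lam a X = \sum_i \sum_j (Theta lam *m Q^T *m X) i j ^+ 2 * a j.
Proof.
rewrite /gfun.
have -> : X^T *m Mmat Q lam *m X = (Theta lam *m Q^T *m X)^T *m (Theta lam *m Q^T *m X).
  by rewrite !trmx_mulR trmxK Theta_T /Mmat ?mulmxA.
rewrite -mulmxA mxtrace_mulCR tr_diag; apply: eq_bigr => i _.
by apply: eq_bigr => j _; rewrite mxE.
Qed.

Lemma gfun_ge0 (d K : nat) (Q : 'M[R]_(d, K)) lam a (X : 'M[R]_(d, K)) :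
  (forall i, 0 <= a i) -> 0 <= gfun Q lam a X.
Proof.
move=> ha; rewrite gfun_sum; apply: sumr_ge0 => i _; apply: sumr_ge0 => j _.
by apply: mulr_ge0 => //; apply: sqr_ge0.
Qed.

Lemma trL1 (d K : nat) (M : 'M[R]_d) (D : 'M[R]_K) (Z W : 'M[R]_(d, K)) :
  \tr (Z^T *m M *m W *m D) = \tr (D *m Z^T *m M *m W).
Proof. by rewrite mxtrace_mulCR ?mulmxA. Qed.

Lemma trL2 (d K : nat) (M : 'M[R]_d) (D : 'M[R]_K) (Z W : 'M[R]_(d, K)) :
  M^T = M -> D^T = D ->
  \tr (Z^T *m M *m W *m D) = \tr (D *m W^T *m M *m Z).
Proof.
move=> MT DT; rewrite -mxtrace_tr !trmx_mulR trmxK MT DT ?mulmxA //.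
Qed.

Lemma expand_g (d K : nat) (M : 'M[R]_d) (D : 'M[R]_K) (X Y : 'M[R]_(d, K)) :
  M^T = M -> D^T = D ->
  \tr (Y^T *m M *m Y *m D) = \tr (X^T *m M *m X *m D)
    + 2 * (\tr (D *m X^T *m M *m Y) - \tr (D *m X^T *m M *m X))
    + \tr ((Y - X)^T *m M *m (Y - X) *m D).
Proof.
move=> MT DT.
have -> : (Y - X)^T = Y^T - X^T by rewrite linearB.
rewrite !mulmxBl !mulmxBr !mulmxBl !linearB /=.
rewrite (trL2 Y X MT DT) (trL1 _ _ X Y) (trL1 _ _ X X). lra.
Qed.

Lemma partA (d K : nat) (Q : 'M[R]_(d, K)) lam (a : 'I_K -> R) alpha (X Y : 'M[R]_(d, K)) :
  (forall i, 0 <= a i) -> stiefel X -> in_proj_St (Aalpha Q lam a alpha X) Y ->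
  alpha * frob (X - Y) ^+ 2 <= gfun Q lam a Y - gfun Q lam a X.
Proof.
move=> ha hX [hY hmin].
have hA := @proj_max _ _ _ Y X hY hX (hmin X hX).
have gH := @gfun_ge0 _ _ Q lam a (Y - X) ha.
have MT : (Mmat Q lam)^T = Mmat Q lam by exact: Mmat_T.
have DT : (diag_a a)^T = diag_a a by exact: diag_a_T.
have e3 := @expand_g _ _ _ _ X Y MT DT.
move: hA gH; rewrite /gfun e3.
have At : (Aalpha Q lam a alpha X)^T = alpha *: X^T + diag_a a *m X^T *m Mmat Q lam.
  by rewrite /Aalpha linearD linearZ /= trmx_mulR DT trmx_mulR MT mulmxA.
have e2 := @frob2_expand _ _ X Y hY; rewrite hX mxtrace1 in e2.
rewrite At !mulmxDl -!scalemxAl !linearD !linearZ /= hX mxtrace1 e2.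
rewrite ?mulmxA.
nra.
Qed.

Lemma single_le_sum (K : nat) (F : 'I_K -> R) k : (forall i, 0 <= F i) -> F k <= \sum_i F i.
Proof. by move=> h; rewrite (bigD1 k) //= lerDl sumr_ge0. Qed.

Lemma sum_diag_le (K : nat) (F : 'I_K -> 'I_K -> R) : (forall i j, 0 <= F i j) ->
  \sum_i F i i <= \sum_i \sum_j F i j.
Proof. by move=> h; apply: ler_sum => i _; apply: single_le_sum. Qed.

Lemma diag_entry (K : nat) (e : 'I_K -> R) i j :
  diag_mx (\row_k e k) i j = e i *+ (i == j).
Proof. by rewrite /diag_mx mxE mxE. Qed.

Lemma gfunQ (d K : nat) (Q : 'M[R]_(d, K)) (lam : 'I_K -> R) (a : 'I_K -> R) :
  stiefel Q -> (forall i, 0 <= lam i) -> gfun Q lam a Q = \sum_k lam k * a k.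
Proof.
move=> hQ hl; rewrite /gfun /Mmat.
have -> : Q^T *m (Q *m Theta lam *m Theta lam *m Q^T) *m Q = Theta lam *m Theta lam.
  by rewrite !mulmxA hQ mul1mx -!mulmxA hQ mulmx1.
rewrite /mxtrace; apply: eq_bigr => k _.
rewrite /diag_a /Theta mul_mx_diag mxE mul_diag_mx mxE diag_entry !mxE eqxx mulr1n.
by rewrite -expr2 sqr_sqrtr.
Qed.

Lemma gfun_lb (d K : nat) (Q : 'M[R]_(d, K)) (lam a : 'I_K -> R) (X : 'M[R]_(d, K)) :
  (forall i, 0 <= lam i) -> (forall i, 0 <= a i) ->
  \sum_k lam k * a k * (Q^T *m X) k k ^+ 2 <= gfun Q lam a X.
Proof.
move=> hl ha; rewrite gfun_sum.
apply: le_trans (sum_diag_le _); last first.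
  by move=> i j; apply: mulr_ge0 => //; apply: sqr_ge0.
apply: ler_sum => k _; rewrite -mulmxA /Theta mul_diag_mx mxE !mxE.
rewrite exprMn sqr_sqrtr //; lra.
Qed.

Lemma frob_cols (m n : nat) (B : 'M[R]_(m, n)) :
  frob B ^+ 2 = \sum_k (B^T *m B) k k /\ forall k, 0 <= (B^T *m B) k k.
Proof.
split; first by rewrite frob2T.
move=> k; rewrite mxE; apply: sumr_ge0 => l _; rewrite mxE -expr2; apply: sqr_ge0.
Qed.

Lemma QS_entry (d K : nat) (Q X : 'M[R]_(d, K)) (s : 'I_K -> R) k :
  stiefel Q -> stiefel X -> (forall k, s k ^+ 2 = 1) ->
  ((X - Q *m diag_mx (\row_k s k))^T *m (X - Q *m diag_mx (\row_k s k))) k k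
    = 2 - 2 * s k * (Q^T *m X) k k.
Proof.
move=> hQ hX hs.
set S := diag_mx (\row_k s k).
have ST : S^T = S by exact: tr_diag_mx.
have -> : (X - Q *m S)^T = X^T - S *m Q^T by rewrite linearB /= trmx_mulR ST.
rewrite !mulmxBl !mulmxBr hX.
have e1 : S *m Q^T *m (Q *m S) = S *m S by rewrite mulmxA -(mulmxA S) hQ mulmx1.
have e2 : X^T *m (Q *m S) = (Q^T *m X)^T *m S by rewrite trmx_mulR trmxK mulmxA.
have e3 : S *m Q^T *m X = S *m (Q^T *m X) by rewrite mulmxA.
rewrite e1 e2 e3 /S mul_diag_mx !mul_mx_diag !mxE !eqxx !mulr1n.
set p := (\sum_j _ * _ j k).
have := hs k. nra.
Qed.

Lemma partB_one (d K : nat) (Q X : 'M[R]_(d, K)) (lam a s : 'I_K -> R) :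
  stiefel Q -> stiefel X -> (forall i, 0 <= lam i) -> (forall i, 0 <= a i) ->
  (forall k, s k ^+ 2 = 1) ->
  gfun Q lam a Q - gfun Q lam a X <=
  (\sum_k lam k * a k) * frob (X - Q *m diag_mx (\row_k s k)) ^+ 2.
Proof.
move=> hQ hX hl ha hs.
rewrite gfunQ //.
have hg := gfun_lb Q X hl ha.
have [hf hnn] := frob_cols (X - Q *m diag_mx (\row_k s k)).
rewrite hf mulr_sumr.
apply: le_trans (_ : _ <= \sum_k lam k * a k - \sum_k lam k * a k * (Q^T *m X) k k ^+ 2) _.
  lra.
rewrite -sumrB; apply: ler_sum => k _.
have e := hnn k; rewrite QS_entry // in e *.
set b := \sum_k lam k * a k.
have hb : lam k * a k <= b by apply: (single_le_sum (F := fun k => lam k * a k)) => i; apply: mulr_ge0.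
have hla : 0 <= lam k * a k by apply: mulr_ge0.
set p := (Q^T *m X) k k.
have h1 : 0 <= (b - lam k * a k) * (2 - 2 * s k * p) by apply: mulr_ge0 => //; lra.
have h2 : 0 <= lam k * a k * (p - s k) ^+ 2 by apply: mulr_ge0 => //; apply: sqr_ge0.
have := hs k.
nra.
Qed.

Lemma partB (d K : nat) (Q X : 'M[R]_(d, K)) (lam a : 'I_K -> R) :
  stiefel Q -> stiefel X -> (forall i, 0 <= lam i) -> (forall i, 0 <= a i) ->
  gfun Q lam a Q - gfun Q lam a X <= (\sum_k lam k * a k) * dF X Q ^+ 2.
Proof.
move=> hQ hX hl ha.
rewrite /dF; apply: (big_ind (fun v => gfun Q lam a Q - gfun Q lam a X <= (\sum_k lam k * a k) * v ^+ 2)).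
- have := partB_one (s := fun _ => 1) hQ hX hl ha (fun _ => expr1n _ _).
  have -> : diag_mx (\row_k (1 : R)) = 1%:M :> 'M[R]_K.
    by apply/matrixP => i j; rewrite diag_entry !mxE.
  by rewrite mulmx1.
- by move=> x y hx hy; rewrite /Order.min; case: ifP.
- move=> q _; apply: partB_one => // k.
  by case: (q k); rewrite ?expr1n ?sqrrN ?expr1n.
Qed.

Lemma maxim_E (d K : nat) (A U Y : 'M[R]_(d, K)) (s : 'I_K -> R) (V : 'M[R]_K) :
  U^T *m U = 1%:M -> V^T *m V = 1%:M -> (forall i, 0 <= s i) ->
  A = U *m diag_mx (\row_i s i) *m V^T -> stiefel Y ->
  (forall Z, stiefel Z -> \tr (A^T *m Z) <= \tr (A^T *m Y)) ->
  (Y *m V - U) *m diag_mx (\row_i s i) = 0.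
Proof.
move=> hU hV hs eA hY hmax.
set S := diag_mx (\row_i s i).
have ST : S^T = S by exact: tr_diag_mx.
have VV : V *m V^T = 1%:M by apply: mulmx1C.
have hW : stiefel (U *m V^T).
  by rewrite /stiefel trmx_mulR trmxK mulmxA -(mulmxA V) hU mulmx1; exact: VV.
have hm := hmax _ hW.
have At : A^T = V *m S *m U^T by rewrite eA !trmx_mulR trmxK ST mulmxA.
have tW : \tr (A^T *m (U *m V^T)) = \tr S.
  by rewrite At mulmxA -(mulmxA _ U^T) hU mulmx1 mxtrace_mulCR mulmxA hV mul1mx.
have tY : \tr (A^T *m Y) = \tr (S *m (U^T *m Y *m V)).
  by rewrite At -!mulmxA mxtrace_mulCR -!mulmxA.
set E := Y *m V - U.
set P := U^T *m Y *m V.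
have EE : E^T *m E = 1%:M + 1%:M - P^T - P.
  have -> : E^T = V^T *m Y^T - U^T by rewrite /E linearB /= trmx_mulR.
  rewrite /E !mulmxBlR !mulmxBrR hU.
  have -> : V^T *m Y^T *m (Y *m V) = 1%:M.
    by rewrite mulmxA -(mulmxA _ Y^T) hY mulmx1; exact: hV.
  have -> : V^T *m Y^T *m U = P^T by rewrite /P !trmx_mulR trmxK ?mulmxA.
  have -> : U^T *m (Y *m V) = P by rewrite /P mulmxA.
  by rewrite !opprB addrC addrACA (addrC (- P)) addrA.
have tE : \tr (E *m S *m E^T) = 2 * \tr S - 2 * \tr (S *m P).
  rewrite mxtrace_mulCR mulmxA EE !mulmxBlR !mulmxDl !linearB !linearD /= mul1mx.
  have -> : \tr (P^T *m S) = \tr (S *m P).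
    by rewrite -mxtrace_tr trmx_mulR trmxK ST.
  rewrite (mxtrace_mulCR P); lra.
have hle : \tr (E *m S *m E^T) <= 0 by rewrite tE -tY -tW; lra.
move: hle; rewrite tr_diag => hle.
have hnn : forall i j, 0 <= E i j ^+ 2 * (\row_i s i) 0 j.
  by move=> i j; rewrite mxE; apply: mulr_ge0 => //; apply: sqr_ge0.
have h0 : \sum_i \sum_j E i j ^+ 2 * (\row_i s i) 0 j = 0.
  apply/eqP; rewrite eq_le hle /=; apply: sumr_ge0 => i _; apply: sumr_ge0 => j _; exact: hnn.
clearbody E; apply/matrixP => i j; rewrite /S mul_mx_diag !mxE.
have hi : \sum_j E i j ^+ 2 * (\row_i s i) 0 j = 0.
  apply: (psumr_eq0P _ h0) => // k _; apply: sumr_ge0 => l _; exact: hnn.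
have hij : E i j ^+ 2 * (\row_i s i) 0 j = 0.
  apply: (psumr_eq0P _ hi) => // k _; exact: hnn.
move: hij; rewrite mxE => hij.
apply/eqP; rewrite -sqrf_eq0; apply/eqP.
by rewrite exprMn [s j ^+ 2]expr2 mulrA hij mul0r.
Qed.

Lemma frob_sqrt_le (m n p q : nat) (B : 'M[R]_(m, n)) (C : 'M[R]_(p, q)) c :
  0 <= c -> frob B ^+ 2 <= c * frob C ^+ 2 -> frob B <= Num.sqrt c * frob C.
Proof.
move=> hc h.
rewrite -(ger0_norm (frob_ge0 B)) -sqrtr_sqr.
rewrite -(ger0_norm (frob_ge0 C)) -sqrtr_sqr -sqrtrM //.
by rewrite ler_sqrt // mulr_ge0 // sqr_ge0.
Qed.

Lemma rho_bound (d K : nat) (A U X Y : 'M[R]_(d, K)) (s : 'I_K -> R) (V : 'M[R]_K) Sb :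
  U^T *m U = 1%:M -> V^T *m V = 1%:M -> (forall i, 0 <= s i) ->
  A = U *m diag_mx (\row_i s i) *m V^T -> stiefel Y ->
  (forall Z, stiefel Z -> \tr (A^T *m Z) <= \tr (A^T *m Y)) ->
  (forall j, s j ^+ 2 <= Sb) -> 0 <= Sb ->
  frob (X *m V *m diag_mx (\row_i s i) *m V^T - A) <= Num.sqrt Sb * frob (Y - X).
Proof.
move=> hU hV hs eA hY hmax hSb hSb0.
have hE := maxim_E hU hV hs eA hY hmax.
set S := diag_mx (\row_i s i) in hE eA *.
have ST : S^T = S by exact: tr_diag_mx.
have VV : V *m V^T = 1%:M by apply: mulmx1C.
have hUS : U *m S = Y *m V *m S.
  by apply/eqP; rewrite eq_sym -subr_eq0 -mulmxBlR hE.
have -> : X *m V *m S *m V^T - A = (X - Y) *m V *m S *m V^T.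
  by rewrite eA hUS !mulmxBlR.
apply: frob_sqrt_le => //.
set G := (X - Y) *m V.
have -> : frob (G *m S *m V^T) ^+ 2 = frob (G *m S) ^+ 2.
  rewrite !frob2 !trmx_mulR trmxK.
  by rewrite mulmxA -(mulmxA _ V^T) hV mulmx1.
rewrite frob2 tr_sq.
have -> : frob (Y - X) ^+ 2 = \sum_i \sum_j G i j ^+ 2.
  rewrite -opprB frobN frob2 -tr_sq /G trmx_mulR mulmxA -(mulmxA _ V) VV mulmx1.
  by [].
rewrite mulr_sumr; apply: ler_sum => i _; rewrite mulr_sumr; apply: ler_sum => j _.
rewrite /S mul_mx_diag !mxE exprMn mulrC; apply: ler_wpM2r; first exact: sqr_ge0.
exact: hSb.
Qed.

Lemma svd_sum (d K : nat) (A U : 'M[R]_(d, K)) (s : 'I_K -> R) (V : 'M[R]_K) :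
  U^T *m U = 1%:M -> V^T *m V = 1%:M ->
  A = U *m diag_mx (\row_i s i) *m V^T ->
  \sum_j s j ^+ 2 = \sum_i \sum_j A i j ^+ 2.
Proof.
move=> hU hV eA.
rewrite -tr_sq -frob2 frob2T eA.
set S := diag_mx (\row_i s i).
have ST : S^T = S by exact: tr_diag_mx.
rewrite !trmx_mulR trmxK ST.
have -> : V *m (S *m U^T) *m (U *m S *m V^T) = V *m (S *m S *m V^T).
  by rewrite -!mulmxA (mulmxA U^T) hU mul1mx.
rewrite mxtrace_mulCR -mulmxA hV mulmx1 /mxtrace; apply: eq_bigr => j _.
by rewrite /S mul_mx_diag !mxE eqxx mulr1n expr2.
Qed.

Lemma stiefel_entry (d K : nat) (X : 'M[R]_(d, K)) l j : stiefel X -> `|X l j| <= 1.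
Proof.
move=> hX.
have h : X l j ^+ 2 <= 1.
  have e : (X^T *m X) j j = 1 by rewrite hX mxE eqxx.
  move: e; rewrite mxE => e; rewrite -e.
  apply: le_trans (single_le_sum (F := fun l => X l j ^+ 2) l _) _.
    by move=> i; apply: sqr_ge0.
  by rewrite [Z in _ <= Z](eq_bigr (fun l => X l j ^+ 2)) // => i _; rewrite mxE expr2.
rewrite ler_norml; apply/andP; split; nra.
Qed.

Lemma A_entry_bound (d K : nat) (Q : 'M[R]_(d, K)) lam (a : 'I_K -> R) alpha
  (X : 'M[R]_(d, K)) i j :
  0 <= alpha -> (forall i, 0 <= a i) -> stiefel X ->
  `|Aalpha Q lam a alpha X i j| <= alpha + (\sum_l `|Mmat Q lam i l|) * a j.
Proof.
move=> hal ha hX.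
rewrite /Aalpha /diag_a mul_mx_diag !mxE.
apply: le_trans (ler_normD _ _) _; apply: lerD.
  rewrite normrM ger0_norm // -{2}(mulr1 alpha); apply: ler_wpM2l => //.
  exact: stiefel_entry.
rewrite normrM (ger0_norm (ha j)); apply: ler_wpM2r => //.
apply: le_trans (ler_norm_sum _ _ _) _; apply: ler_sum => l _.
rewrite normrM -{2}(mulr1 `|Mmat Q lam i l|); apply: ler_wpM2l => //.
exact: stiefel_entry.
Qed.

End Helpers.

Theorem proposition1 (R : rcfType) (d K : nat) (hK : (0 < K)%N) (hdK : (K < d)%N)
  (Q : 'M[R]_(d, K)) (hQ : stiefel Q)
  (lam : 'I_K -> R) (hlam_dec : forall i j : 'I_K, (i < j)%N -> lam j < lam i)
  (hlam_pos : forall i, 0 < lam i)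
  (a : 'I_K -> R) (ha_dec : forall i j : 'I_K, (i < j)%N -> a j < a i)
  (ha_pos : forall i, 0 < a i) :
  forall alpha : R, 0 < alpha ->
  exists beta3 beta4 : R, 0 < beta3 /\ 0 < beta4 /\
  forall Xs : nat -> 'M[R]_(d, K),
    stiefel (Xs 0%N) ->
    (forall t, in_proj_St (Aalpha Q lam a alpha (Xs t)) (Xs t.+1)) ->
    forall t : nat,
      [/\ gfun Q lam a (Xs t.+1) - gfun Q lam a (Xs t)
            >= alpha * frob (Xs t - Xs t.+1) ^+ 2,
          gfun Q lam a Q - gfun Q lam a (Xs t) <= beta3 * dF (Xs t) Q ^+ 2
        & forall (U : 'M[R]_(d, K)) (s : 'I_K -> R) (V : 'M[R]_K),
            thin_svd (Aalpha Q lam a alpha (Xs t)) U s V ->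
            rho_svd Q lam a alpha (Xs t) s V <= beta4 * frob (Xs t.+1 - Xs t)].
Proof.
move=> alpha halpha.
have ha0 : forall i, 0 <= a i by move=> i; apply: ltW.
have hl0 : forall i, 0 <= lam i by move=> i; apply: ltW.
set Cb := \sum_i \sum_j (alpha + (\sum_l `|Mmat Q lam i l|) * a j) ^+ 2.
have Cb0 : 0 <= Cb by apply: sumr_ge0 => i _; apply: sumr_ge0 => j _; apply: sqr_ge0.
have B0 : 0 <= \sum_k lam k * a k by apply: sumr_ge0 => k _; apply: mulr_ge0.
exists (\sum_k lam k * a k + 1), (Num.sqrt (Cb + 1)).
split; first lra.
split; first by rewrite sqrtr_gt0; lra.
move=> Xs h0 hstep.
have hst : forall t, stiefel (Xs t) by elim => [|t _] //; case: (hstep t).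
move=> t; split.
- exact: partA ha0 (hst t) (hstep t).
- apply: le_trans (partB hQ (hst t) hl0 ha0) _.
  apply: ler_wpM2r; [exact: sqr_ge0 | lra].
- move=> U s V [hU hV hs eA]; case: (hstep t) => hY hmin.
  rewrite /rho_svd; apply: (rho_bound (Xs t) hU hV hs eA hY).
  + by move=> Z hZ; exact: proj_max hY hZ (hmin Z hZ).
  + move=> j.
    apply: le_trans (_ : _ <= \sum_j s j ^+ 2) _.
      by apply: (single_le_sum (F := fun j => s j ^+ 2)) => i; apply: sqr_ge0.
    rewrite (svd_sum hU hV eA).
    apply: le_trans (_ : _ <= Cb) _; last lra.
    apply: ler_sum => i _; apply: ler_sum => k _.
    have hb := A_entry_bound Q lam i k (ltW halpha) ha0 (hst t).
    have hc : 0 <= alpha + (\sum_l `|Mmat Q lam i l|) * a k.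
      apply: addr_ge0; first exact: ltW.
      apply: mulr_ge0 => //; apply: sumr_ge0 => l _; exact: normr_ge0.
    move: hb hc; rewrite ler_norml => /andP [hb1 hb2] hc; nra.
  + lra.
Qed.
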